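(* Let $p$ be a prime, let $G$ be a direct sum of cyclic $p$-groups and $U\subseteq G$ a subgroup with $p(G/U)=0$. Fix a decomposition of $G$ into cyclic summands and let $T_n$ ($n\ge1$) be the direct sum of all summands of order $p^n$ in it, so $G=\bigoplus_{n\ge1}T_n$; put $G_0=0$, $G_n=\bigoplus_{\ell\le n}T_\ell$ and $U_n=U\cap G_n$. Then for every $n\ge1$ there are subgroups $D\subseteq G_n$ and $E\subseteq D$ with $G_n=G_{n-1}\oplus D$ and $U_n=U_{n-1}\oplus E$, and the pair $(D,E)$ is isomorphic to the direct sum of $\mu^n_n$ copies of $P^n_n=(\mathbb Z/(p^n),\mathbb Z/(p^n))$ and $\mu^n_{n-1}$ copies of $P^n_{n-1}=(\mathbb Z/(p^n),p\mathbb Z/(p^n))$, where $$\mu^n_n=\dim_{\mathbb F_p}\frac{G_{n-1}+U_n}{G_{n-1}+pG_n},\qquad \mu^n_{n-1}=\dim_{\mathbb F_p}\frac{G_n}{G_{n-1}+U_n}.$$ Consequently $(G,U)\cong\bigoplus_{n\ge1}\big[(P^n_n)^{(\mu^n_n)}\oplus(P^n_{n-1})^{(\mu^n_{n-1})}\big]$.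
   Context: A pair $(G,U)$ consists of an abelian group $G$ and a subgroup $U$; isomorphisms of pairs are group isomorphisms $f:G\to G'$ with $f(U)=U'$, and direct sums of pairs are taken componentwise. $(P)^{(\mu)}$ denotes the direct sum of $\mu$ copies of $P$ ($\mu$ a cardinal). *)

(* Defs.v *)
From mathcomp Require Import all_boot all_order all_algebra.
From Stdlib Require List.

Set Implicit Arguments.
Unset Strict Implicit.
Unset Printing Implicit Defensive.

Import GRing.Theory.
Local Open Scope ring_scope.

Definition is_subgroup (G : zmodType) (A : G -> Prop) : Prop :=
  A 0 /\ (forall x y, A x -> A y -> A (x - y)).

Definition addS (G : zmodType) (A B : G -> Prop) : G -> Prop :=
  fun x => exists a b, A a /\ B b /\ x = a + b.

Definition pmulS (G : zmodType) (p : nat) (A : G -> Prop) : G -> Prop :=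
  fun x => exists a, A a /\ x = a *+ p.

Definition int_dsum (G : zmodType) (S A B : G -> Prop) : Prop :=
  is_subgroup A /\ is_subgroup B /\
  (forall x, S x <-> addS A B x) /\ (forall x, A x -> B x -> x = 0).

(* Elements of the external direct sum  (+)_{k in K} Z/(p^(lev k)):
   dependent functions with finite support. *)
Definition fsupp (p : nat) (K : Type) (lev : K -> nat)
  (g : forall k : K, 'Z_(p ^ lev k)%N) : Prop :=
  exists s : seq K, forall k, g k <> 0 -> List.In k s.

(* f is an isomorphism of pairs from (A, B) (A, B subgroups of G) onto the
   standard pair  (+)_{k in K} (Z/(p^(lev k)), S_k), where S_k = Z/(p^(lev k))
   if full k, and S_k = p Z/(p^(lev k)) otherwise. *)
Definition pair_iso_via (G : zmodType) (A B : G -> Prop) (p : nat) (K : Type)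
  (lev : K -> nat) (full : K -> bool)
  (f : G -> forall k : K, 'Z_(p ^ lev k)%N) : Prop :=
  (forall x, B x -> A x) /\
  (forall x y, A x -> A y -> f (x + y) = (fun k => f x k + f y k)) /\
  (forall x y, A x -> A y -> f x = f y -> x = y) /\
  (forall x, A x -> @fsupp p K lev (f x)) /\
  (forall g, @fsupp p K lev g -> exists x, A x /\ f x = g) /\
  (forall x, A x -> (B x <-> forall k, ~~ full k -> (p %| f x k)%N)).

Definition pair_iso (G : zmodType) (A B : G -> Prop) (p : nat) (K : Type)
  (lev : K -> nat) (full : K -> bool) : Prop :=
  exists f, @pair_iso_via G A B p K lev full f.

(* A fixed decomposition of G into cyclic summands of orders p^(e i), e i >= 1,
   given by an isomorphism phi : G ~ (+)_{i in I} Z/(p^(e i)). *)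
Definition cyclic_decomp (G : zmodType) (p : nat) (I : Type) (e : I -> nat)
  (phi : G -> forall i : I, 'Z_(p ^ e i)%N) : Prop :=
  (forall i, (0 < e i)%N) /\
  @pair_iso_via G (fun _ : G => True) (fun _ : G => True) p I e (fun _ => true) phi.

(* G_n = (+)_{l <= n} T_l  w.r.t. the decomposition phi. *)
Definition Gn (G : zmodType) (p : nat) (I : Type) (e : I -> nat)
  (phi : G -> forall i : I, 'Z_(p ^ e i)%N) (n : nat) : G -> Prop :=
  fun x => forall i, (n < e i)%N -> phi x i = 0.

(* dim_{F_p} (N / M) = |J|: the quotient N/M has an F_p-basis indexed by J,
   i.e. there is a family b : J -> N whose images mod M are F_p-linearly
   independent and span N/M. *)
Definition Fp_dim (G : zmodType) (p : nat) (N M : G -> Prop) (J : Type) : Prop :=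
  exists b : J -> G,
    (forall j, N (b j)) /\
    (forall (s : seq J) (c : J -> nat), List.NoDup s ->
       M (\sum_(j <- s) b j *+ c j) -> forall j, List.In j s -> (p %| c j)%N) /\
    (forall x, N x -> exists (s : seq J) (c : J -> nat),
       M (x - \sum_(j <- s) b j *+ c j)).

(* Main.v *)
Require Import Defs.
From mathcomp Require Import all_boot all_order all_algebra.
From mathcomp Require Import boolp classical_sets.
From Stdlib Require Import ClassicalEpsilon FunctionalExtensionality.
From Stdlib Require FinFun.
Set Implicit Arguments. Unset Strict Implicit. Unset Printing Implicit Defensive.
Import GRing.Theory.
Local Open Scope ring_scope.

Section SubG.
Variables (G : zmodType) (A : G -> Prop).
Hypothesis sA : is_subgroup A.
Lemma sg0 : A 0. Proof. by case: sA. Qed.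
Lemma sgB x y : A x -> A y -> A (x - y). Proof. by case: sA => _; apply. Qed.
Lemma sgN x : A x -> A (- x).
Proof. move=> Ax; rewrite -sub0r; exact: sgB sg0 Ax. Qed.
Lemma sgD x y : A x -> A y -> A (x + y).
Proof. move=> Ax Ay; rewrite -[y]opprK; exact: sgB Ax (sgN Ay). Qed.
Lemma sgMn x m : A x -> A (x *+ m).
Proof.
move=> Ax; elim: m => [|m IH]; first by rewrite mulr0n; exact: sg0.
by rewrite mulrS; exact: sgD.
Qed.
Lemma sg_sum (I : Type) (r : seq I) (F : I -> G) :
  (forall i, List.In i r -> A (F i)) -> A (\sum_(i <- r) F i).
Proof.
elim: r => [|i r IH] H; first by rewrite big_nil; exact: sg0.
rewrite big_cons; apply: sgD; first by apply: H; left.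
by apply: IH => j hj; apply: H; right.
Qed.
Lemma sg_sumT (I : Type) (r : seq I) (F : I -> G) :
  (forall i, A (F i)) -> A (\sum_(i <- r) F i).
Proof. by move=> H; apply: sg_sum => i _. Qed.
Lemma sg_eqB x y : A (x - y) -> A y -> A x.
Proof. by move=> h hy; rewrite -(subrK y x); exact: sgD. Qed.
End SubG.

Lemma subr_sym (G : zmodType) (x a b : G) : b - a = (x - a) - (x - b).
Proof. by rewrite opprB [RHS]addrC addrA subrK. Qed.

Lemma addS_sub (G : zmodType) (A B : G -> Prop) :
  is_subgroup A -> is_subgroup B -> is_subgroup (addS A B).
Proof.
move=> sA sB; split; first by exists 0, 0; rewrite addr0; split; [exact: sg0|split; [exact: sg0|]].
move=> x y [a [b [Aa [Bb ->]]]] [a' [b' [Aa' [Bb' ->]]]].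
exists (a - a'), (b - b'); split; first exact: sgB.
split; first exact: sgB.
by rewrite opprD addrACA.
Qed.

Lemma InP (T : eqType) (x : T) (s : seq T) : List.In x s <-> x \in s.
Proof.
elim: s => [|y s IH] /=; first by split.
rewrite in_cons; split.
  by case=> [->|/IH ->]; rewrite ?eqxx ?orbT.
by case/orP => [/eqP ->|/IH]; [left|right].
Qed.

Lemma NoDup_uniq (T : eqType) (s : seq T) : List.NoDup s <-> uniq s.
Proof.
elim: s => [|y s IH] /=; first by split => // _; constructor.
split.
  move=> h; inversion h; subst; apply/andP; split; last by apply/IH.
  by apply/negP => /InP.
case/andP => ny us; constructor; last by apply/IH.
by move/InP; apply/negP.
Qed.

Lemma natZ_eq (m a b : nat) : (1 < m)%N -> a = b %[mod m] ->
  (a%:R : 'Z_m) = b%:R.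
Proof. by move=> m1 h; apply: val_inj; rewrite /= !val_Zp_nat. Qed.

Lemma natZ_0 (m a : nat) : (1 < m)%N -> (a%:R : 'Z_m) = 0 -> (m %| a)%N.
Proof.
by move=> m1 h; rewrite /dvdn -val_Zp_nat // h.
Qed.

Lemma valZ_nat (m a : nat) : (1 < m)%N -> val (a%:R : 'Z_m) = (a %% m)%N.
Proof. by move=> m1; exact: val_Zp_nat. Qed.

Section Coord.
Variables (G : zmodType) (K : eqType) (p : nat) (lev : K -> nat) (d : K -> G)
  (A B : G -> Prop).
Hypotheses (p_gt1 : (1 < p)%N) (lev_gt0 : forall k, (0 < lev k)%N)
  (sA : is_subgroup A) (sB : is_subgroup B) (BA : forall x, B x -> A x)
  (dA : forall k, A (d k)) (dB : forall k, B (d k *+ (p ^ lev k)))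
  (dspan : forall x, A x -> exists s c, uniq s /\ B (x - \sum_(k <- s) d k *+ c k))
  (dind : forall s c, uniq s -> B (\sum_(k <- s) d k *+ c k) ->
            forall k, k \in s -> (p ^ lev k %| c k)%N).

Lemma q_gt1 k : (1 < p ^ lev k)%N.
Proof. by rewrite -{1}(expn0 p) ltn_exp2l. Qed.

Definition ind (s : seq K) (c : K -> nat) k : nat := if k \in s then c k else 0%N.

Lemma sum_ext s t (F : K -> nat) : uniq s -> uniq t -> {subset s <= t} ->
  \sum_(k <- s) d k *+ F k = \sum_(k <- t) d k *+ ind s F k.
Proof.
move=> us ut st.
transitivity (\sum_(k <- t | k \in s) d k *+ F k).
  rewrite -[RHS]big_filter; apply: perm_big; apply: uniq_perm => //.
    by rewrite filter_uniq.
  move=> k; rewrite mem_filter; case ks: (k \in s) => //=.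
  by rewrite (st _ ks).
rewrite big_mkcond; apply: eq_bigr => k _; rewrite /ind.
by case: (k \in s); rewrite ?mulr0n.
Qed.

Lemma cong_of_B t a b : uniq t ->
  B (\sum_(k <- t) d k *+ a k - \sum_(k <- t) d k *+ b k) ->
  forall k, k \in t -> a k = b k %[mod p ^ lev k].
Proof.
move=> ut hB.
set C := fun k => (a k + (p ^ lev k).-1 * b k)%N.
have E : \sum_(k <- t) d k *+ C k =
   (\sum_(k <- t) d k *+ a k - \sum_(k <- t) d k *+ b k)
   + \sum_(k <- t) (d k *+ (p ^ lev k)) *+ b k.
  have -> : \sum_(k <- t) (d k *+ (p ^ lev k)) *+ b k =
     \sum_(k <- t) d k *+ ((p ^ lev k).-1 * b k) + \sum_(k <- t) d k *+ b k.
    rewrite -big_split; apply: eq_bigr => k _.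
    rewrite /= -mulrnA -mulrnDr; congr (_ *+ _).
    by rewrite -{1}(prednK (ltnW (q_gt1 k))) mulSn addnC.
  rewrite (addrC (\sum_(k <- t) d k *+ ((p ^ lev k).-1 * b k))) addrA subrK.
  rewrite /C -big_split; apply: eq_bigr => k _ /=.
  by rewrite mulrnDr.
have HC : B (\sum_(k <- t) d k *+ C k).
  rewrite E; apply: sgD => //; apply: sg_sumT => // k; exact: sgMn.
move=> k kt; have := dind ut HC kt; rewrite /C /dvdn => /eqP h.
have : (a k + (p ^ lev k).-1 * b k + b k = b k %[mod p ^ lev k])%N.
  by rewrite -modnDml h.
rewrite -addnA -mulSnr (prednK (ltnW (q_gt1 k))) mulnC addnC modnMDl.
by [].
Qed.

Definition rep x (sc : seq K * (K -> nat)) :=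
  uniq sc.1 /\ B (x - \sum_(k <- sc.1) d k *+ sc.2 k).

Definition pcoord (x : G) : forall k, 'Z_(p ^ lev k) :=
  match excluded_middle_informative (exists sc, rep x sc) with
  | left h => let sc := proj1_sig (constructive_indefinite_description _ h) in
      fun k => (ind sc.1 sc.2 k)%:R
  | right _ => fun _ => 0
  end.

Lemma pcoordE x s c : rep x (s, c) -> forall k, pcoord x k = (ind s c k)%:R.
Proof.
move=> r k; rewrite /pcoord; case: excluded_middle_informative => [h|]; last first.
  by move=> n; exfalso; apply: n; exists (s, c).
case: (constructive_indefinite_description _ h) => [[s' c'] [us' B']] /=.
case: r => /= us Bs.
set t := undup (s ++ s').
have ut : uniq t := undup_uniq _.
have sub1 : {subset s <= t} by move=> z zs; rewrite mem_undup mem_cat zs.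
have sub2 : {subset s' <= t} by move=> z zs; rewrite mem_undup mem_cat zs orbT.
have H := @cong_of_B t (ind s' c') (ind s c) ut.
rewrite -!sum_ext // in H.
case kt: (k \in t).
  apply: natZ_eq; first exact: q_gt1.
  apply: H => //; rewrite (subr_sym x); exact: sgB.
have ks : k \notin s by apply/negP => /sub1; rewrite kt.
have ks' : k \notin s' by apply/negP => /sub2; rewrite kt.
by rewrite /ind (negbTE ks) (negbTE ks').
Qed.

Lemma pcoord_rep x : A x -> exists s c, rep x (s, c).
Proof. by move=> /dspan [s [c [us h]]]; exists s, c. Qed.

Lemma pcoord_supp x : A x -> exists s, uniq s /\ forall k, pcoord x k <> 0 -> k \in s.
Proof.
move=> /pcoord_rep [s [c r]]; exists s; split; first by case: r.
move=> k; rewrite (pcoordE r) /ind; by case: (k \in s).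
Qed.

Lemma pcoordD x y : A x -> A y -> forall k, pcoord (x + y) k = pcoord x k + pcoord y k.
Proof.
move=> /pcoord_rep [s [c r]] /pcoord_rep [s' [c' r']] k.
set t := undup (s ++ s').
have ut : uniq t := undup_uniq _.
have sub1 : {subset s <= t} by move=> z zs; rewrite mem_undup mem_cat zs.
have sub2 : {subset s' <= t} by move=> z zs; rewrite mem_undup mem_cat zs orbT.
have rt : rep (x + y) (t, fun k => (ind s c k + ind s' c' k)%N).
  split => //=; case: r => us Bs; case: r' => us' Bs'.
  have -> : \sum_(k <- t) d k *+ (ind s c k + ind s' c' k) =
     \sum_(k <- s) d k *+ c k + \sum_(k <- s') d k *+ c' k.
    rewrite (sum_ext _ us ut sub1) (sum_ext _ us' ut sub2) -big_split.
    by apply: eq_bigr => i _ /=; rewrite mulrnDr.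
  rewrite opprD addrACA; exact: sgD.
rewrite (pcoordE rt) (pcoordE r) (pcoordE r') -natrD; congr (_%:R).
rewrite /ind; case kt: (k \in t) => //.
have ks : k \in s = false by apply/negP => /sub1; rewrite kt.
have ks' : k \in s' = false by apply/negP => /sub2; rewrite kt.
by rewrite ks ks'.
Qed.

Lemma pcoordB0 x : B x -> forall k, pcoord x k = 0.
Proof.
move=> Bx k; have r : rep x ([::], fun _ => 0%N).
  by split => //=; rewrite big_nil subr0.
by rewrite (pcoordE r).
Qed.

Lemma pcoord0B x : A x -> (forall k, pcoord x k = 0) -> B x.
Proof.
move=> /pcoord_rep [s [c r]] h; case: r => /= us Bs.
apply: sg_eqB (Bs) _ => //; apply: sg_sum => // k /InP ks.
have := h k; rewrite (pcoordE (conj us Bs)) /ind ks => /natZ_0 => /(_ (q_gt1 k)).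
move=> /dvdnP [m ->]; rewrite mulnC mulrnA; exact: sgMn.
Qed.

Lemma pcoord_surj (g : forall k, 'Z_(p ^ lev k)) (s : seq K) :
  (forall k, g k <> 0 -> k \in s) ->
  exists x, A x /\ (forall k, pcoord x k = g k) /\
     x = \sum_(k <- undup s) d k *+ g k.
Proof.
move=> hs; set x := \sum_(k <- undup s) d k *+ g k.
have r : rep x (undup s, fun k => (g k : nat)).
  by split; [exact: undup_uniq | rewrite /= subrr; exact: sg0].
exists x; split; first by apply: sg_sumT => // k; exact: sgMn.
split => // k; rewrite (pcoordE r) /ind mem_undup.
case ks: (k \in s); first by rewrite natr_Zp.
case: (g k =P 0) => [->|/hs]; first by [].
by rewrite ks.
Qed.

Lemma pcoord_rep2 x s : A x -> uniq s -> (forall k, pcoord x k <> 0 -> k \in s) ->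
  B (x - \sum_(k <- s) d k *+ pcoord x k).
Proof.
move=> /pcoord_rep [s' [c' r']] us hs; case: (r') => /= us' Bs'.
set t := undup (s ++ s').
have ut : uniq t := undup_uniq _.
have sub1 : {subset s <= t} by move=> z zs; rewrite mem_undup mem_cat zs.
have sub2 : {subset s' <= t} by move=> z zs; rewrite mem_undup mem_cat zs orbT.
have -> : \sum_(k <- s) d k *+ pcoord x k = \sum_(k <- t) d k *+ pcoord x k.
  rewrite (sum_ext _ us ut sub1); apply: eq_bigr => k _; rewrite /ind.
  case ks: (k \in s) => //; case: (pcoord x k =P 0) => [->|/hs]; first by [].
  by rewrite ks.
rewrite (sum_ext _ us' ut sub2) in Bs'.
apply: (@sg_eqB _ _ sB _ (x - \sum_(k <- t) d k *+ ind s' c' k)) => //.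
have -> : x - \sum_(k <- t) d k *+ pcoord x k - (x - \sum_(k <- t) d k *+ ind s' c' k)
   = \sum_(k <- t) (d k *+ ind s' c' k - d k *+ pcoord x k).
  by rewrite sumrB opprB addrC addrA subrK.
apply: sg_sumT => // k.
rewrite (pcoordE r') /= valZ_nat; last exact: q_gt1.
set n := ind s' c' k.
rewrite {1}(divn_eq n (p ^ lev k)) mulrnDr addrK mulnC mulrnA; exact: sgMn.
Qed.

End Coord.

Section Phi.
Variables (p : nat) (G : zmodType) (Ix : Type) (e : Ix -> nat)
  (phi : G -> forall i : Ix, 'Z_(p ^ e i)%N).
Hypotheses (pp : prime p) (cd : cyclic_decomp phi).

Lemma p_gt1 : (1 < p)%N. Proof. exact: prime_gt1. Qed.
Lemma e_gt0 i : (0 < e i)%N. Proof. by case: cd. Qed.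
Lemma pe_gt1 i : (1 < p ^ e i)%N.
Proof. by rewrite -{1}(expn0 p) ltn_exp2l ?p_gt1 ?e_gt0. Qed.

Lemma phiD x y i : phi (x + y) i = phi x i + phi y i.
Proof. by case: cd => _ [_ [hadd _]]; rewrite (hadd x y Logic.I Logic.I). Qed.

Lemma phi0 i : phi 0 i = 0.
Proof.
have := phiD 0 0 i; rewrite addr0 => h.
by apply: (addrI (phi 0 i)); rewrite addr0 -h.
Qed.

Lemma phiN x i : phi (- x) i = - phi x i.
Proof.
apply: (addrI (phi x i)); rewrite -phiD !subrr; exact: phi0.
Qed.

Lemma phiB x y i : phi (x - y) i = phi x i - phi y i.
Proof. by rewrite phiD phiN. Qed.

Lemma phiMn x m i : phi (x *+ m) i = phi x i *+ m.
Proof. by elim: m => [|m IH]; rewrite ?mulr0n ?phi0 // !mulrS phiD IH. Qed.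

Lemma phi_inj x y : (forall i, phi x i = phi y i) -> x = y.
Proof.
move=> h; case: cd => _ [_ [_ [hinj _]]]; apply: hinj => //.
exact: functional_extensionality_dep.
Qed.

Lemma phi_surj (g : forall i : Ix, 'Z_(p ^ e i)) (s : seq Ix) :
  (forall i, g i <> 0 -> List.In i s) -> exists x, forall i, phi x i = g i.
Proof.
move=> h; case: cd => _ [_ [_ [_ [_ [hs _]]]]].
have [x [_ hx]] := hs g (ex_intro _ s h).
by exists x => i; rewrite hx.
Qed.

Lemma phi_supp x : exists s, forall i, phi x i <> 0 -> List.In i s.
Proof. by case: cd => _ [_ [_ [_ [hf _]]]]; exact: hf. Qed.

Local Notation GN n := (Gn phi n).

Lemma Gn_sub n : is_subgroup (GN n).
Proof.
split; first by move=> i _; exact: phi0.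
by move=> x y hx hy i hi; rewrite phiB hx ?hy ?subrr.
Qed.

Lemma Gn_mono m n x : (m <= n)%N -> GN m x -> GN n x.
Proof. by move=> mn hx i hi; apply: hx; exact: leq_ltn_trans hi. Qed.

Lemma Gn0 x : GN 0 x -> x = 0.
Proof. by move=> h; apply: phi_inj => i; rewrite phi0 h ?e_gt0. Qed.

Lemma Gn_bound x : exists N, GN N x.
Proof.
have [s hs] := phi_supp x.
exists (foldr maxn 0%N (map e s)) => i hi.
case: (phi x i =P 0) => // /hs hin; exfalso.
suff : (e i <= foldr maxn 0 (map e s))%N by rewrite leqNgt hi.
move: hin; clear; elim: s => [|j s IH] //= [->|/IH h]; first by rewrite leq_maxl.
exact: leq_trans h (leq_maxr _ _).
Qed.

Lemma Zp_mulrn_dvd (m : nat) (z : 'Z_m) k : (1 < m)%N -> (m %| k)%N -> z *+ k = 0.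
Proof.
move=> m1 h; rewrite -[z]natr_Zp -mulrnA; apply: val_inj.
rewrite /= valZ_nat //; apply/eqP; rewrite -/(dvdn _ _); exact: dvdn_mull.
Qed.

Lemma Gn_exp n x : GN n x -> x *+ (p ^ n) = 0.
Proof.
move=> h; apply: phi_inj => i; rewrite phiMn phi0.
case: (ltnP n (e i)) => hi; first by rewrite h // mul0rn.
apply: Zp_mulrn_dvd; first exact: pe_gt1.
exact: dvdn_exp2l.
Qed.

Lemma Gn_neg n x : GN n x -> - x = x *+ (p ^ n).-1.
Proof.
move=> h; apply/eqP; rewrite eq_sym -subr_eq0 opprK -mulrSr prednK ?expn_gt0 ?prime_gt0 //.
by rewrite Gn_exp.
Qed.

Lemma Gn_key n k w : (0 < n)%N -> (k < n)%N -> GN n w -> GN n.-1 (w *+ (p ^ k)) ->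
  exists a y, GN n.-1 a /\ GN n y /\ w = a + y *+ p.
Proof.
move=> n0 kn hw hk.
have [s hs] := phi_supp w.
pose ga := fun i => if (e i < n)%N then phi w i else 0.
pose gy := fun i => if e i == n then (((phi w i : nat) %/ p)%N%:R : 'Z_(p ^ e i)) else 0.
have [a ha] : exists a, forall i, phi a i = ga i.
  apply: (phi_surj (s := s)) => i; rewrite /ga; case: ifP => // _; exact: hs.
have [y hy] : exists y, forall i, phi y i = gy i.
  apply: (phi_surj (s := s)) => i; rewrite /gy; case: ifP => // _.
  case: (phi w i =P 0) => [->|/hs //]; by rewrite /= div0n.
exists a, y; split.
  move=> i hi; rewrite ha /ga; case: ifP => //.
  by move=> h; move: hi; rewrite -ltnS (prednK n0) ltnS leqNgt h.
split.
  by move=> i hi; rewrite hy /gy; case: eqP => // ein; rewrite ein ltnn in hi.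
apply: phi_inj => i; rewrite phiD phiMn ha hy /ga /gy.
case: (ltngtP (e i) n) => ein.
- by rewrite mul0rn addr0.
- by rewrite hw // mul0rn addr0.
rewrite add0r.
have hz : phi w i *+ p ^ k = 0 by rewrite -phiMn; apply: hk; rewrite ein ltn_predL.
set z := phi w i in hz *.
have hv : (p ^ n %| z * p ^ k)%N.
  rewrite -ein; move: hz; rewrite -[z in z *+ _]natr_Zp -mulrnA => /(congr1 val).
  rewrite /= valZ_nat ?pe_gt1 // => h0.
  rewrite /dvdn; apply/eqP; exact: h0.
have hpv : (p %| z)%N.
  move: hv; rewrite -(subnK (ltnW kn)) expnD dvdn_pmul2r ?expn_gt0 ?prime_gt0 //.
  have nk : (0 < n - k)%N by rewrite subn_gt0.
  apply: dvdn_trans; rewrite -(prednK nk) expnS; exact: dvdn_mulr.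
by rewrite -mulrnA divnK // natr_Zp.
Qed.

End Phi.

Section Basis.
Variables (G : zmodType) (p : nat) (N M : G -> Prop).
Hypotheses (pp : prime p) (sM : is_subgroup M) (NM : forall x, N x -> M (x *+ p)).

Local Notation T := {classic G}.

Definition indep (S : set G) : Prop :=
  (forall x, S x -> N x) /\
  forall (s : seq T) (c : T -> nat), uniq s -> (forall y, y \in s -> S y) ->
    M (\sum_(y <- s) (y : G) *+ c y) -> forall y, y \in s -> (p %| c y)%N.

Lemma NMk x k : N x -> (p %| k)%N -> M (x *+ k).
Proof. by move=> Nx /dvdnP [m ->]; rewrite mulnC mulrnA; apply: sgMn; auto. Qed.

Lemma chain_indep (F : set (set G)) :
  (F `<=` indep)%classic -> total_on F subset -> indep (\bigcup_(X in F) X)%classic.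
Proof.
move=> FP tot; split.
  by move=> x [X FX Xx]; have [h _] := FP _ FX; exact: h.
move=> s c us hs.
have [->|[X [FX hX]]] : s = [::] \/ exists X, F X /\ forall y, y \in s -> X y.
  move: hs; clear us; elim: s => [|y s IH] hs; first by left.
  right; have [X0 FX0 X0y] := hs y (mem_head _ _).
  have [->|[X1 [FX1 h1]]] : s = [::] \/ exists X, F X /\ forall y, y \in s -> X y.
    by apply: IH => z zs; apply: hs; rewrite inE zs orbT.
    by exists X0; split => // z; rewrite inE => /eqP ->.
  have [sub|sub] := tot _ _ FX0 FX1.
    exists X1; split => // z; rewrite inE => /orP [/eqP ->|/h1 //]; exact: sub.
  exists X0; split => // z; rewrite inE => /orP [/eqP -> //|/h1]; exact: sub.
  by [].
have [_ h] := FP _ FX; exact: h.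
Qed.

Lemma basis_max : exists S, indep S /\
  forall x, N x -> exists (s : seq T) (c : T -> nat),
     (forall y, y \in s -> S y) /\ M (x - \sum_(y <- s) (y : G) *+ c y).
Proof.
have [S [PS maxS]] := Zorn_bigcup chain_indep.
exists S; split => // x Nx.
apply: NNPP => nsp.
have xS : ~ S x.
  move=> Sx; apply: nsp; exists [:: (x : T)], (fun _ => 1%N); split.
    by move=> y; rewrite inE => /eqP ->.
  by rewrite big_seq1 /= subrr; exact: sg0.
apply: (maxS (fun y => S y \/ y = x)).
  split; first by move=> y Sy; left.
  by move=> h; apply: xS; apply: h; right.
have [SN Sind] := PS.
split; first by move=> y [/SN //|->].
move=> s c us hs hM.
case xs: ((x : T) \in s); last first.
  have hs' : forall y, y \in s -> S y.
    by move=> y ys; case: (hs y ys) => // ye; rewrite -ye ys in xs.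
  exact: Sind hM.
pose r := [seq y <- s | y != (x : T)].
have ur : uniq r by rewrite filter_uniq.
have hr : forall y, y \in r -> S y.
  move=> y; rewrite mem_filter => /andP [yx ys].
  by case: (hs y ys) => // ye; rewrite ye eqxx in yx.
have Esum : \sum_(y <- s) (y : G) *+ c y = x *+ c x + \sum_(y <- r) (y : G) *+ c y.
  rewrite (bigD1_seq (x : T)) //= /r; congr (_ + _); exact: (esym (big_filter _ _ _)).
have pcx : (p %| c x)%N.
  apply: NNPP => npc.
  have cop : coprime p (c x) by rewrite prime_coprime //; apply/negP.
  have [a _ ha] := Bezoutl (c x) (prime_gt0 pp).
  rewrite (eqP cop) in ha.
  apply: nsp; exists r, (fun y => (a * c y)%N); split => //.
  have h1 : M ((\sum_(y <- s) (y : G) *+ c y) *+ a) by exact: sgMn.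
  have h2 : M (x *+ (1 + a * c x)) by exact: NMk.
  rewrite Esum mulrnDl -!sumrMnl in h1.
  have := sgN sM (sgB sM h1 h2).
  congr M; rewrite mulrnDr mulr1n.
  have -> : \sum_(i <- r) (i : G) *+ (a * c i) = \sum_(i <- r) (i : G) *+ c i *+ a.
    by apply: eq_bigr => i _; rewrite mulnC mulrnA.
  rewrite -mulrnA mulnC.
  by rewrite opprB opprD addrA addrK.
move=> y ys; case: (y =P (x : T)) => [->|/eqP yx] //.
have hM' : M (\sum_(y <- r) (y : G) *+ c y).
  have hx : M (x *+ c x) by exact: NMk.
  by move: (sgB sM hM hx); rewrite Esum addrAC subrr add0r.
apply: (Sind r c ur hr hM'); by rewrite mem_filter yx ys.
Qed.

Lemma basis_exists : exists J : Type, Fp_dim p N M J.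
Proof.
have [S [[SN Sind] hspan]] := basis_max.
exists {x : G | S x}.
pose lift (y : T) : option {x : G | S x} :=
  match excluded_middle_informative (S y) with
  | left h => Some (exist _ (y : G) h) | right _ => None end.
exists (fun j => proj1_sig j); split; first by case.
split.
  move=> s c nd hM j hj.
  pose cT (y : T) : nat := match lift y with Some j => c j | None => 0%N end.
  have vinj : FinFun.Injective (fun j : {x : G | S x} => (proj1_sig j : T)).
    move=> [x hx] [y hy] /= exy; subst; congr exist; exact: Prop_irrelevance.
  have hc : forall j, cT (proj1_sig j) = c j.
    move=> [x hx]; rewrite /cT /lift /=; case: excluded_middle_informative => h //.
    by congr c; congr exist; exact: Prop_irrelevance.
  set s' := map (fun j => proj1_sig j : T) s.
  have us' : uniq s'.
    by apply/NoDup_uniq; apply: FinFun.Injective_map_NoDup.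
  have E : \sum_(j <- s) proj1_sig j *+ c j = \sum_(y <- s') (y : G) *+ cT y.
    by rewrite big_map; apply: eq_bigr => k _; rewrite hc.
  rewrite E in hM.
  have hs' : forall y, y \in s' -> S y.
    by move=> y /InP /List.in_map_iff [k [<- _]]; exact: proj2_sig.
  rewrite -hc; apply: (Sind s' _ us' hs' hM).
  by apply/InP; exact: List.in_map.
move=> x /hspan [s' [c' [hs' hM]]].
have E : map (fun j => proj1_sig j : T) (pmap lift s') = s'.
  elim: s' hs' {hM} => [|y s' IH] hs' //=.
  rewrite /lift; case: excluded_middle_informative => [h|nh] /=.
    by rewrite IH // => z zs; apply: hs'; rewrite inE zs orbT.
  by exfalso; apply: nh; apply: hs'; rewrite mem_head.
exists (pmap lift s'), (fun j => c' (proj1_sig j)).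
rewrite -[X in x - X](big_map (fun j => proj1_sig j : T) xpredT (fun y : T => (y : G) *+ c' y)).
by rewrite E.
Qed.

End Basis.

Section Comb.
Variables (G : zmodType) (L : Type) (f : L -> G).
Definition comb (l : seq (L * nat)) : G := \sum_(kc <- l) f kc.1 *+ kc.2.
Lemma comb_cat l l' : comb (l ++ l') = comb l + comb l'.
Proof. by rewrite /comb big_cat. Qed.
Lemma comb_mul l m : comb (map (fun kc => (kc.1, (kc.2 * m)%N)) l) = comb l *+ m.
Proof.
rewrite /comb big_map -sumrMnl; apply: eq_bigr => kc _ /=; by rewrite mulrnA.
Qed.
Lemma comb_seq (s : seq L) (c : L -> nat) :
  comb (map (fun k => (k, c k)) s) = \sum_(k <- s) f k *+ c k.
Proof. by rewrite /comb big_map. Qed.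
Lemma comb_nil : comb [::] = 0. Proof. by rewrite /comb big_nil. Qed.
Lemma sum_pdiv (p : nat) (s : seq L) (c : L -> nat) :
  (forall j, List.In j s -> (p %| c j)%N) ->
  \sum_(j <- s) f j *+ c j = (\sum_(j <- s) f j *+ (c j %/ p)) *+ p.
Proof.
rewrite -sumrMnl; elim: s => [|j s IH] h; first by rewrite !big_nil.
rewrite !big_cons IH; last by move=> i hi; apply: h; right.
by rewrite -mulrnA divnK //; apply: h; left.
Qed.
End Comb.

Lemma comb_uniq (G : zmodType) (L : eqType) (f : L -> G) (l : seq (L * nat)) :
  exists s c, uniq s /\ comb f l = \sum_(k <- s) f k *+ c k.
Proof.
elim: l => [|[k0 c0] l [s [c [us E]]]].
  by exists [::], (fun _ => 0%N); rewrite comb_nil big_nil.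
have -> : comb f ((k0, c0) :: l) = f k0 *+ c0 + comb f l by rewrite /comb big_cons.
rewrite E; case ks: (k0 \in s).
  exists s, (fun k => if k == k0 then (c0 + c k)%N else c k); split => //.
  rewrite [RHS](bigD1_seq k0) //= eqxx mulrnDr -addrA; congr (_ + _).
  rewrite (bigD1_seq k0) //=; congr (_ + _).
  by apply: eq_bigr => k /negbTE ->.
exists (k0 :: s), (fun k => if k == k0 then c0 else c k); split.
  by rewrite /= ks.
rewrite big_cons eqxx; congr (_ + _); apply: eq_big_seq => k kin.
by case: eqP => // ek; rewrite ek ks in kin.
Qed.

Definition getl (X Y : Type) (k : X + Y) : option X :=
  match k with inl j => Some j | inr _ => None end.
Definition getr (X Y : Type) (k : X + Y) : option Y :=
  match k with inl _ => None | inr j => Some j end.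

Lemma In_getl (X Y : Type) (s : seq {classic (X + Y)}) j :
  List.In j (pmap (@getl X Y) s) <-> (inl j : {classic (X + Y)}) \in s.
Proof.
elim: s => [|k s IH] //=; rewrite in_cons; case: k => [i|i] /=.
  split; first by case=> [->|/IH ->]; rewrite ?eqxx ?orbT.
  case/orP => [/eqP [->]|/IH]; by [left|right].
have -> : ((inl j : {classic (X + Y)}) == inr i) = false by apply/eqP.
by rewrite IH.
Qed.

Lemma In_getr (X Y : Type) (s : seq {classic (X + Y)}) j :
  List.In j (pmap (@getr X Y) s) <-> (inr j : {classic (X + Y)}) \in s.
Proof.
elim: s => [|k s IH] //=; rewrite in_cons; case: k => [i|i] /=.
  have -> : ((inr j : {classic (X + Y)}) == inl i) = false by apply/eqP.
  by rewrite IH.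
split; first by case=> [->|/IH ->]; rewrite ?eqxx ?orbT.
case/orP => [/eqP [->]|/IH]; by [left|right].
Qed.

Lemma ND_getl (X Y : Type) (s : seq {classic (X + Y)}) :
  uniq s -> List.NoDup (pmap (@getl X Y) s).
Proof.
elim: s => [|k s IH] /=; first by constructor.
case/andP => ks us; case: k ks => [i|i] ks /=; last exact: IH.
by constructor; [move/In_getl; apply/negP | exact: IH].
Qed.

Lemma ND_getr (X Y : Type) (s : seq {classic (X + Y)}) :
  uniq s -> List.NoDup (pmap (@getr X Y) s).
Proof.
elim: s => [|k s IH] /=; first by constructor.
case/andP => ks us; case: k ks => [i|i] ks /=; first exact: IH.
by constructor; [move/In_getr; apply/negP | exact: IH].
Qed.

Lemma sum_split (G : zmodType) (X Y : Type) (f : X + Y -> G) (s : seq {classic (X + Y)})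
  (c : X + Y -> nat) :
  \sum_(k <- s) f k *+ c k =
  \sum_(j <- pmap (@getl X Y) s) f (inl j) *+ c (inl j) +
  \sum_(j <- pmap (@getr X Y) s) f (inr j) *+ c (inr j).
Proof.
elim: s => [|k s IH]; first by rewrite !big_nil addr0.
case: k => [i|i] /=; rewrite !big_cons IH; first by rewrite addrA.
by rewrite addrCA.
Qed.

Section Level.
Variables (p : nat) (G : zmodType) (U : G -> Prop) (Ix : Type) (e : Ix -> nat)
  (phi : G -> forall i : Ix, 'Z_(p ^ e i)%N).
Hypotheses (pp : prime p) (sU : is_subgroup U) (pU : forall x, U (x *+ p))
  (cd : cyclic_decomp phi).
Variables (n : nat) (J1 J2 : Type) (b1 : J1 -> G) (b2 : J2 -> G).
Hypothesis hn : (0 < n)%N.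

Local Notation GN k := (Gn phi k).
Definition Un := fun x => U x /\ GN n x.
Definition N1 := addS (GN n.-1) Un.
Definition M1 := addS (GN n.-1) (pmulS p (GN n)).

Hypotheses
  (hb1N : forall j, N1 (b1 j))
  (hb1I : forall (s : seq J1) (c : J1 -> nat), List.NoDup s ->
     M1 (\sum_(j <- s) b1 j *+ c j) -> forall j, List.In j s -> (p %| c j)%N)
  (hb1S : forall x, N1 x -> exists (s : seq J1) (c : J1 -> nat),
     M1 (x - \sum_(j <- s) b1 j *+ c j))
  (hb2N : forall j, GN n (b2 j))
  (hb2I : forall (s : seq J2) (c : J2 -> nat), List.NoDup s ->
     N1 (\sum_(j <- s) b2 j *+ c j) -> forall j, List.In j s -> (p %| c j)%N)
  (hb2S : forall x, GN n x -> exists (s : seq J2) (c : J2 -> nat),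
     N1 (x - \sum_(j <- s) b2 j *+ c j)).

Lemma sGn k : is_subgroup (GN k). Proof. exact: Gn_sub. Qed.
Lemma sUn : is_subgroup Un.
Proof.
split; first by split; [exact: sg0 | exact: sg0 (sGn n)].
move=> x y [ux gx] [uy gy]; split; first exact: sgB.
exact: (sgB (sGn n) gx gy).
Qed.
Lemma sN1 : is_subgroup N1. Proof. exact: addS_sub (sGn _) sUn. Qed.
Lemma spm : is_subgroup (pmulS p (GN n)).
Proof.
split; first by exists 0; split; [exact: sg0 (sGn n)| rewrite mul0rn].
move=> x y [a [ha ->]] [b [hb ->]]; exists (a - b); split; first exact: (sgB (sGn n) ha hb).
by rewrite mulrnBl.
Qed.
Lemma sM1 : is_subgroup M1. Proof. exact: addS_sub (sGn _) spm. Qed.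

Lemma Gnp x : GN n.-1 x -> GN n x.
Proof. by apply: Gn_mono; exact: leq_pred. Qed.
Lemma GnN1 x : GN n.-1 x -> N1 x.
Proof. by move=> h; exists x, 0; rewrite addr0; split => //; split => //; exact: sg0 sUn. Qed.
Lemma UnN1 x : Un x -> N1 x.
Proof. by move=> h; exists 0, x; rewrite add0r; split => //; exact: sg0 (sGn _). Qed.
Lemma GnM1 x : GN n.-1 x -> M1 x.
Proof. by move=> h; exists x, 0; rewrite addr0; split => //; split => //; exact: sg0 spm. Qed.
Lemma pM1 x : GN n x -> M1 (x *+ p).
Proof.
move=> h; exists 0, (x *+ p); rewrite add0r; split; first exact: sg0 (sGn _).
by split => //; exists x.
Qed.
Lemma M1N1 x : M1 x -> N1 x.
Proof.
move=> [a [y [ha [[z [hz ->]] ->]]]]; exists a, (z *+ p); split => //.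
by split => //; split; [exact: pU | apply: (sgMn (sGn n))].
Qed.
Lemma N1Gn x : N1 x -> GN n x.
Proof. by move=> [a [u [ha [[_ hu] ->]]]]; apply: sgD (sGn _) _ _ _ _ => //; exact: Gnp. Qed.

Lemma ex_upart j : exists u, Un u /\ GN n.-1 (b1 j - u).
Proof. have [a [u [ha [hu ->]]]] := hb1N j; exists u; split => //; by rewrite addrK. Qed.
Definition upart j := proj1_sig (constructive_indefinite_description _ (ex_upart j)).
Lemma upartP j : Un (upart j) /\ GN n.-1 (b1 j - upart j).
Proof. exact: proj2_sig (constructive_indefinite_description _ (ex_upart j)). Qed.

Local Notation K := {classic (J1 + J2)}.
Definition dl (k : J1 + J2) : G := match k with inl j => upart j | inr j => b2 j end.

Lemma dl_Gn k : GN n (dl k).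
Proof. by case: k => [j|j] /=; [case: (upartP j) => [[]] | exact: hb2N]. Qed.
Lemma dl_U j : U (dl (inl j)). Proof. by case: (upartP j) => [[]]. Qed.


Lemma span_M1 x : GN n x -> exists l : seq (K * nat), M1 (x - comb dl l).
Proof.
move=> /hb2S [s2 [c2 h2]]; have [s1 [c1 h1]] := hb1S h2.
exists (map (fun j => ((inr j : K), c2 j)) s2 ++ map (fun j => ((inl j : K), c1 j)) s1).
rewrite comb_cat /comb !big_map /=.
set B2 := \sum_(j <- s2) b2 j *+ c2 j in h1 *.
set B1 := \sum_(j <- s1) b1 j *+ c1 j in h1.
set U1 := \sum_(j <- s1) upart j *+ c1 j.
have -> : x - (B2 + U1) = (x - B2 - B1) + (B1 - U1).
  by rewrite addrA subrK opprD addrA.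
apply: (sgD sM1) => //; apply: GnM1.
rewrite /B1 /U1 -sumrB; apply: (sg_sumT (sGn _)) => j.
by rewrite -mulrnBl; apply: (sgMn (sGn _)); case: (upartP j).
Qed.

Lemma span_iter m x : GN n x -> exists (l : seq (K * nat)) a y,
  GN n.-1 a /\ GN n y /\ x - comb dl l = a + y *+ (p ^ m).
Proof.
move=> hx; elim: m => [|m [l [a [y [ha [hy E]]]]]].
  exists [::], 0, x; split; first exact: sg0 (sGn _).
  by split => //; rewrite comb_nil subr0 add0r expn0 mulr1n.
have [l' hl'] := span_M1 hy.
case: hl' => [a' [z [ha' [[y'' [hy'' ->]] E']]]].
exists (l ++ map (fun kc => (kc.1, (kc.2 * p ^ m)%N)) l'), (a + a' *+ p ^ m), y''.
split; first by apply: (sgD (sGn _)) => //; exact: (sgMn (sGn _)).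
split => //.
rewrite comb_cat comb_mul opprD addrA E -addrA -mulrnBl.
have -> : y - comb dl l' = a' + y'' *+ p by rewrite E'.
by rewrite mulrnDl addrA -mulrnA -expnS.
Qed.

Lemma span_Gn x : GN n x -> exists (l : seq (K * nat)), GN n.-1 (x - comb dl l).
Proof.
move=> hx; have [l [a [y [ha [hy E]]]]] := span_iter n hx.
by exists l; rewrite E (Gn_exp pp cd hy) addr0.
Qed.

Lemma span_Gn_uniq x : GN n x -> exists (s : seq K) c, uniq s /\
  GN n.-1 (x - \sum_(k <- s) dl k *+ c k).
Proof.
move=> /span_Gn [l hl]; have [s [c [us E]]] := comb_uniq (L:=K) dl l.
by exists s, c; rewrite -E.
Qed.

Lemma dl_sum_Gn (s : seq K) (c : K -> nat) : GN n (\sum_(k <- s) dl k *+ c k).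
Proof. apply: (sg_sumT (sGn _)) => k; apply: (sgMn (sGn _)); exact: dl_Gn. Qed.

Lemma dl_sum_U (s : seq K) (c : K -> nat) :
  (forall j, (inr j : K) \in s -> (p %| c (inr j))%N) -> U (\sum_(k <- s) dl k *+ c k).
Proof.
move=> h; apply: (sg_sum sU) => k /InP ks; case: k ks => [j|j] ks /=.
  by apply: (sgMn sU); exact: dl_U.
have /dvdnP [m ->] := h j ks.
by rewrite mulrnA; exact: pU.
Qed.

Lemma U1_sum (s : seq J1) (c : J1 -> nat) : Un (\sum_(j <- s) upart j *+ c j).
Proof. apply: (sg_sumT sUn) => j; apply: (sgMn sUn); by case: (upartP j). Qed.

Lemma ind_N1 (s : seq K) (c : K -> nat) : uniq s -> N1 (\sum_(k <- s) dl k *+ c k) ->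
  forall j, (inr j : K) \in s -> (p %| c (inr j))%N.
Proof.
move=> us hN j js; rewrite sum_split in hN.
have h2 : N1 (\sum_(j <- pmap (@getr J1 J2) s) dl (inr j) *+ c (inr j)).
  move: (sgB sN1 hN (UnN1 (U1_sum (pmap (@getl J1 J2) s) (fun j => c (inl j))))).
  by rewrite addrC addKr.
by apply: (hb2I (ND_getr us) h2); apply/In_getr.
Qed.

Lemma ind_M1 (s : seq K) (c : K -> nat) : uniq s -> M1 (\sum_(k <- s) dl k *+ c k) ->
  forall k, k \in s -> (p %| c k)%N.
Proof.
move=> us hM.
have h2 := ind_N1 us (M1N1 hM).
set S1 := \sum_(j <- pmap (@getl J1 J2) s) dl (inl j) *+ c (inl j).
set S2 := \sum_(j <- pmap (@getr J1 J2) s) dl (inr j) *+ c (inr j).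
have E : \sum_(k <- s) dl k *+ c k = S1 + S2 by rewrite sum_split.
have hS2 : M1 S2.
  rewrite /S2 (@sum_pdiv _ _ _ p) /=; first apply: pM1.
    apply: (sg_sumT (sGn _)) => j; apply: (sgMn (sGn _)); exact: hb2N.
  by move=> j /In_getr /h2.
have hS1 : M1 S1 by move: (sgB sM1 hM hS2); rewrite E addrK.
have hB1 : M1 (\sum_(j <- pmap (@getl J1 J2) s) b1 j *+ c (inl j)).
  have -> : \sum_(j <- pmap (@getl J1 J2) s) b1 j *+ c (inl j) =
     S1 + \sum_(j <- pmap (@getl J1 J2) s) (b1 j - upart j) *+ c (inl j).
    rewrite /S1 -big_split; apply: eq_bigr => j _ /=.
    by rewrite mulrnBl addrC subrK.
  apply: (sgD sM1) => //; apply: GnM1; apply: (sg_sumT (sGn _)) => j.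
  by apply: (sgMn (sGn _)); case: (upartP j).
case=> [j|j] ks; last exact: h2.
by apply: (hb1I (ND_getl us) hB1); apply/In_getl.
Qed.

Lemma ind_Gn (s : seq K) (c : K -> nat) : uniq s -> GN n.-1 (\sum_(k <- s) dl k *+ c k) ->
  forall k, k \in s -> (p ^ n %| c k)%N.
Proof.
move=> us hG.
suff : forall m, (m <= n)%N -> forall k, k \in s -> (p ^ m %| c k)%N by apply.
elim=> [|m IH] mn k ks; first by rewrite expn0 dvd1n.
have mn' : (m < n)%N by [].
have IH' := IH (ltnW mn').
pose c' := fun k => (c k %/ p ^ m)%N.
have E : \sum_(k <- s) dl k *+ c k = (\sum_(k <- s) dl k *+ c' k) *+ p ^ m.
  rewrite -sumrMnl; apply: eq_big_seq => i iis; rewrite -mulrnA /c' divnK //.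
  exact: IH'.
rewrite E in hG.
have [a [y [ha [hy Ew]]]] := Gn_key pp cd hn mn' (dl_sum_Gn s c') hG.
have hM : M1 (\sum_(k <- s) dl k *+ c' k).
  by rewrite Ew; apply: (sgD sM1); [exact: GnM1 | exact: pM1].
have := ind_M1 us hM ks; rewrite /c' => hd.
rewrite -(divnK (IH' k ks)) expnS; exact: dvdn_mul hd (dvdnn _).
Qed.

Definition Dset x := exists l : seq (K * nat), x = comb dl l.
Definition Eset x := Dset x /\ U x.

Lemma D_Gn x : Dset x -> GN n x.
Proof.
move=> [l ->]; apply: (sg_sumT (sGn _)) => kc; apply: (sgMn (sGn _)); exact: dl_Gn.
Qed.

Lemma D_sub : is_subgroup Dset.
Proof.
split; first by exists [::]; rewrite comb_nil.
move=> x y [l ->] [l' ->].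
exists (l ++ map (fun kc => (kc.1, (kc.2 * (p ^ n).-1)%N)) l').
rewrite comb_cat comb_mul; congr (_ + _); apply: (Gn_neg pp cd).
by apply: D_Gn; exists l'.
Qed.

Lemma D_cap x : Dset x -> GN n.-1 x -> x = 0.
Proof.
move=> [l ->]; have [s [c [us ->]]] := comb_uniq (L:=K) dl l => hG.
apply: big1_seq => k /andP [_ ks].
have /dvdnP [m ->] := ind_Gn us hG ks.
by rewrite mulnC mulrnA (Gn_exp pp cd (dl_Gn k)) mul0rn.
Qed.

Lemma D_split x : GN n x -> exists a y, GN n.-1 a /\ Dset y /\ x = a + y.
Proof.
move=> /span_Gn [l hl]; exists (x - comb dl l), (comb dl l).
by split => //; split; [exists l | rewrite subrK].
Qed.

Lemma E_sub : is_subgroup Eset.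
Proof.
split; first by split; [exact: sg0 D_sub | exact: sg0 sU].
by move=> x y [dx ux] [dy uy]; split; [exact: (sgB D_sub) | exact: sgB].
Qed.

Lemma D_int : int_dsum (GN n) (GN n.-1) Dset.
Proof.
split; first exact: sGn.
split; first exact: D_sub.
split; last by move=> x h1 h2; exact: D_cap.
move=> x; split; first by move/D_split => [a [y [ha [hy ->]]]]; exists a, y.
move=> [a [y [ha [hy ->]]]]; apply: (sgD (sGn _)); [exact: Gnp | exact: D_Gn].
Qed.

Lemma E_int : int_dsum Un (fun x => U x /\ GN n.-1 x) Eset.
Proof.
split; first by split; [split; [exact: sg0 sU | exact: sg0 (sGn _)] |
  move=> x y [ux gx] [uy gy]; split; [exact: sgB | exact: (sgB (sGn _))]].
split; first exact: E_sub.
split; last by move=> x [_ h1] [h2 _]; exact: D_cap.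
move=> x; split.
  move=> [ux gx]; have [a [y [ha [hy E]]]] := D_split gx.
  have [l El] := hy; have [s [c [us Es]]] := comb_uniq (L:=K) dl l.
  have hN : N1 (\sum_(k <- s) dl k *+ c k).
    rewrite -Es -El; exists (- a), x; split; first exact: (sgN (sGn _) ha).
    by split; [split | rewrite E addKr].
  have Uy : U y by rewrite El Es; apply: dl_sum_U; exact: ind_N1.
  have ea : a = x - y by rewrite E addrK.
  exists a, y; split; last by split => //; split.
  by split => //; rewrite ea; exact: (sgB sU ux Uy).
move=> [a [y [[ua ga] [[dy uy] ->]]]]; split; first exact: sgD.
by apply: (sgD (sGn _)); [exact: Gnp | exact: D_Gn].
Qed.


Definition cp := pcoord p (fun _ : K => n) (dl : K -> G) (GN n.-1).

Lemma pgt1 : (1 < p)%N. Proof. exact: prime_gt1. Qed.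
Lemma levgt0 : forall k : K, (0 < (fun _ : K => n) k)%N. Proof. by []. Qed.
Lemma dlB : forall k : K, GN n.-1 (dl k *+ p ^ (fun _ : K => n) k).
Proof. by move=> k; rewrite /= (Gn_exp pp cd (dl_Gn k)); exact: sg0 (sGn _). Qed.
Lemma dspanL : forall x, GN n x -> exists (s : seq K) c, uniq s /\
  GN n.-1 (x - \sum_(k <- s) dl k *+ c k).
Proof. exact: span_Gn_uniq. Qed.
Lemma dindL : forall (s : seq K) c, uniq s -> GN n.-1 (\sum_(k <- s) dl k *+ c k) ->
  forall k, k \in s -> (p ^ (fun _ : K => n) k %| c k)%N.
Proof. exact: ind_Gn. Qed.

Lemma cpD x y : GN n x -> GN n y -> forall k, cp (x + y) k = cp x k + cp y k.
Proof. exact: (pcoordD pgt1 levgt0 (sGn _) dlB dspanL dindL). Qed.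
Lemma cpB0 x : GN n.-1 x -> forall k, cp x k = 0.
Proof. exact: (pcoordB0 pgt1 levgt0 (sGn _) dlB dindL). Qed.
Lemma cp0B x : GN n x -> (forall k, cp x k = 0) -> GN n.-1 x.
Proof. exact: (pcoord0B pgt1 levgt0 (sGn _) dlB dspanL dindL). Qed.
Lemma cp_surj (g : forall k : K, 'Z_(p ^ n)) (s : seq K) :
  (forall k, g k <> 0 -> k \in s) ->
  exists x, GN n x /\ (forall k, cp x k = g k).
Proof.
move=> hs; have [x [hx [hc _]]] :=
  pcoord_surj pgt1 levgt0 (sGn n) (sGn _) dl_Gn dlB dindL (g := g) hs.
by exists x.
Qed.
Lemma cp_supp x : GN n x -> exists s : seq K, uniq s /\ forall k, cp x k <> 0 -> k \in s.
Proof. exact: (pcoord_supp pgt1 levgt0 (sGn _) dlB dspanL dindL). Qed.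
Lemma cp_rep2 x (s : seq K) : GN n x -> uniq s -> (forall k, cp x k <> 0 -> k \in s) ->
  GN n.-1 (x - \sum_(k <- s) dl k *+ cp x k).
Proof. exact: (pcoord_rep2 pgt1 levgt0 (sGn _) dlB dspanL dindL). Qed.

Lemma level_iso (D E : G -> Prop) : (forall x, E x -> D x) ->
  int_dsum (GN n) (GN n.-1) D ->
  int_dsum (fun x => U x /\ GN n x) (fun x => U x /\ GN n.-1 x) E ->
  @pair_iso_via G D E p (J1 + J2) (fun _ : J1 + J2 => n) (fun k => if k is inl _ then true else false) cp.
Proof.
move=> ED [_ [sD [HD capD]]] [_ [sE [HE capE]]].
have DG : forall x, D x -> GN n x.
  by move=> x dx; apply/HD; exists 0, x; rewrite add0r; split => //; exact: sg0 (sGn _).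
have EU : forall x, E x -> U x.
  move=> x ex; have : (U x /\ GN n x) by apply/HE; exists 0, x; rewrite add0r; split => //;
    split; [exact: sg0 sU | exact: sg0 (sGn _)].
  by case.
split => //.
split.
  move=> x y dx dy; apply: functional_extensionality_dep => k; exact: (cpD (DG _ dx) (DG _ dy) k).
split.
  move=> x y dx dy exy; apply/eqP; rewrite -subr_eq0; apply/eqP.
  apply: capD; last exact: (sgB sD dx dy).
  apply: cp0B; first exact: (sgB (sGn _) (DG _ dx) (DG _ dy)).
  move=> k; have := cpD (sgB (sGn _) (DG _ dx) (DG _ dy)) (DG _ dy) k.
  by rewrite subrK exy => h; apply: (addIr (cp y k)); rewrite add0r -h.
split.
  move=> x dx; have [s [us hs]] := cp_supp (DG _ dx).
  by exists s => k /hs /InP.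
split.
  move=> g [s hs].
  have [z [hz hcz]] := cp_surj (g := g) (s := s) (fun k hk => (@InP K k s).1 (hs k hk)).
  have [a [y [ha [hy Ez]]]] : addS (GN n.-1) D z by apply/HD.
  rewrite Ez in hcz.
  exists y; split => //; apply: functional_extensionality_dep => k.
  by rewrite -hcz (cpD (Gnp ha) (DG _ hy)) (cpB0 ha) add0r.
move=> x dx; split.
  move=> ex k; case: k => [j|j] //= _.
  have ux := EU _ ex; have gx := DG _ dx.
  have [s [us hs]] := cp_supp gx.
  have hr := cp_rep2 gx us hs.
  case js: ((inr j : K) \in s); last first.
    case: (cp x (inr j) =P 0) => [->|/hs]; first by rewrite dvdn0.
    by rewrite js.
  have hN : N1 (\sum_(k <- s) dl k *+ cp x k).
    exists (- (x - \sum_(k <- s) dl k *+ cp x k)), x; split; first exact: (sgN (sGn _) hr).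
    by split; [split | rewrite opprB subrK].
  exact: (ind_N1 us hN js).
move=> hp; have gx := DG _ dx.
have [s [us hs]] := cp_supp gx.
have hr := cp_rep2 gx us hs.
set S := \sum_(k <- s) dl k *+ cp x k in hr.
have uS : U S by apply: dl_sum_U => j _; exact: (hp (inr j)).
have [u' [e' [[uu' gu'] [ee' Eu]]]] : addS (fun x => U x /\ GN n.-1 x) E S.
  by apply/HE; split => //; exact: dl_sum_Gn.
have hx0 : x - e' = 0.
  apply: capD; last exact: (sgB sD dx (ED _ ee')).
  have -> : x - e' = (x - S) + u' by rewrite Eu opprD addrA addrAC subrK.
  exact: (sgD (sGn _) hr gu').
by move/eqP: hx0; rewrite subr_eq0 => /eqP ->.
Qed.

End Level.

Section Main.
Variables (p : nat) (G : zmodType) (U : G -> Prop) (Ix : Type) (e : Ix -> nat)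
  (phi : G -> forall i : Ix, 'Z_(p ^ e i)%N).
Hypotheses (pp : prime p) (sU : is_subgroup U) (pU : forall x, U (x *+ p))
  (cd : cyclic_decomp phi).

Local Notation GN k := (Gn phi k).

Lemma N1M1p n x : N1 U phi n x -> M1 phi n (x *+ p).
Proof.
move=> [a [u [ha [[uu gu] ->]]]]; exists (a *+ p), (u *+ p); split.
  by apply: (sgMn (Gn_sub cd _)).
by split; [exists u | rewrite mulrnDl].
Qed.

Lemma GnN1p n x : GN n x -> N1 U phi n (x *+ p).
Proof.
move=> gx; exists 0, (x *+ p); rewrite add0r; split; first exact: sg0 (Gn_sub cd _).
by split => //; split; [exact: pU | apply: (sgMn (Gn_sub cd _))].
Qed.

Lemma part1 n : (0 < n)%N ->
     exists D E : G -> Prop,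
       (forall x, E x -> D x) /\
       int_dsum (Gn phi n) (Gn phi n.-1) D /\
       int_dsum (fun x => U x /\ Gn phi n x) (fun x => U x /\ Gn phi n.-1 x) E /\
       forall J1 J2 : Type,
         Fp_dim p (addS (Gn phi n.-1) (fun x => U x /\ Gn phi n x))
                  (addS (Gn phi n.-1) (pmulS p (Gn phi n))) J1 ->
         Fp_dim p (Gn phi n) (addS (Gn phi n.-1) (fun x => U x /\ Gn phi n x)) J2 ->
         pair_iso D E p (fun _ : J1 + J2 => n) (fun k => if k is inl _ then true else false).
Proof.
move=> hn.
have [J10 [b10 [h1N [h1I h1S]]]] := @basis_exists G p (N1 U phi n) (M1 phi n)
   pp (sM1 cd n) (@N1M1p n).
have [J20 [b20 [h2N [h2I h2S]]]] := @basis_exists G p (Gn phi n) (N1 U phi n)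
   pp (sN1 sU cd n) (@GnN1p n).
exists (Dset b20 h1N), (Eset b20 h1N); split; first by move=> x [].
split; first exact: (D_int pp sU pU cd hn h1N h1I h1S h2N h2I h2S).
split; first exact: (E_int pp sU pU cd hn h1N h1I h1S h2N h2I h2S).
move=> J1 J2 [b1 [g1N [g1I g1S]]] [b2 [g2N [g2I g2S]]].
eexists; apply: (level_iso pp sU pU cd hn g1N g1I g1S g2N g2I g2S).
- by move=> x [].
- exact: (D_int pp sU pU cd hn h1N h1I h1S h2N h2I h2S).
- exact: (E_int pp sU pU cd hn h1N h1I h1S h2N h2I h2S).
Qed.


Section Global.
Variables (J1 J2 : nat -> Type).
Hypothesis H : forall n : nat, (0 < n)%N ->
        Fp_dim p (addS (Gn phi n.-1) (fun x => U x /\ Gn phi n x))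
                 (addS (Gn phi n.-1) (pmulS p (Gn phi n))) (J1 n) /\
        Fp_dim p (Gn phi n) (addS (Gn phi n.-1) (fun x => U x /\ Gn phi n x)) (J2 n).

Definition B1 m : J1 m.+1 -> G :=
  proj1_sig (constructive_indefinite_description _ (H (ltn0Sn m)).1).
Definition B2 m : J2 m.+1 -> G :=
  proj1_sig (constructive_indefinite_description _ (H (ltn0Sn m)).2).
Definition B1P m := proj2_sig (constructive_indefinite_description _ (H (ltn0Sn m)).1).
Definition B2P m := proj2_sig (constructive_indefinite_description _ (H (ltn0Sn m)).2).
Arguments B1P : clear implicits.
Arguments B1 : clear implicits.
Arguments B2 : clear implicits.
Arguments B2P : clear implicits.

Definition dG (k : {m & (J1 m.+1 + J2 m.+1)%type}) : G :=
  dl (B2 (projT1 k)) (B1P (projT1 k)).1 (projT2 k).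

Local Notation KK := {classic {m & (J1 m.+1 + J2 m.+1)%type}}.
Definition levG (k : KK) := (projT1 k).+1.

Lemma dG_Gn (k : KK) : GN (levG k) (dG k).
Proof. exact: (dl_Gn (B1P (projT1 k)).1 (B2P (projT1 k)).1). Qed.

Lemma top_map (M : nat) (s : seq KK) : (forall k, k \in s -> projT1 k = M) ->
  exists s' : seq {classic (J1 M.+1 + J2 M.+1)},
    s = @map _ KK (fun j => existT _ M j) s'.
Proof.
elim: s => [|k s IH] h; first by exists [::].
have [s' ->] : exists s' : seq {classic (J1 M.+1 + J2 M.+1)},
    s = @map _ KK (fun j => existT _ M j) s'.
  by apply: IH => k' ks; apply: h; rewrite inE ks orbT.
move: (h k (mem_head _ _)); clear h; case: k => m j /= hm; subst m.
by exists (j :: s').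
Qed.

Lemma dG_GnM M (k : KK) : (projT1 k < M)%N -> GN M (dG k).
Proof. move=> h; exact: (@Gn_mono _ _ _ _ phi (levG k) M (dG k) h (@dG_Gn k)). Qed.

Lemma split_top M (s : seq KK) (c : KK -> nat) :
  \sum_(k <- s) dG k *+ c k =
  \sum_(k <- [seq k : KK <- s | projT1 k == M]) dG k *+ c k +
  \sum_(k <- [seq k : KK <- s | projT1 k != M]) dG k *+ c k.
Proof. by rewrite (bigID (fun k : KK => projT1 k == M)) /= !big_filter. Qed.

Lemma rest_Gn M (s : seq KK) (c : KK -> nat) : (forall k, k \in s -> (projT1 k < M.+1)%N) ->
  GN M (\sum_(k <- [seq k : KK <- s | projT1 k != M]) dG k *+ c k).
Proof.
move=> hs; apply: (sg_sum (Gn_sub cd M)) => k /(@InP KK); rewrite mem_filter => /andP [kM ks].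
apply: (sgMn (Gn_sub cd M)); apply: dG_GnM.
by have := hs k ks; rewrite ltnS leq_eqVlt (negbTE kM).
Qed.

Lemma top_ex M (s : seq KK) : uniq s -> exists s' : seq {classic (J1 M.+1 + J2 M.+1)},
  uniq s' /\ [seq k : KK <- s | projT1 k == M] = @map _ KK (fun j => existT _ M j) s'.
Proof.
move=> us; have [s' E] : exists s' : seq {classic (J1 M.+1 + J2 M.+1)},
    [seq k : KK <- s | projT1 k == M] = @map _ KK (fun j => existT _ M j) s'.
  by apply: top_map => k; rewrite mem_filter => /andP [/eqP -> _].
exists s'; split => //.
have : uniq [seq k : KK <- s | projT1 k == M] by rewrite filter_uniq.
rewrite E; exact: (@map_uniq {classic (J1 M.+1 + J2 M.+1)} KK).
Qed.

Lemma glob_ind M (s : seq KK) (c : KK -> nat) : uniq s ->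
  (forall k, k \in s -> (projT1 k < M)%N) ->
  \sum_(k <- s) dG k *+ c k = 0 -> forall k, k \in s -> (p ^ levG k %| c k)%N.
Proof.
elim: M s c => [|M IH] s c us hs h0 k ks; first by have := hs k ks.
have [s' [us' Es']] := top_ex M us.
have E := split_top M s c.
have gr := rest_Gn c hs.
have Etop : \sum_(k <- [seq k : KK <- s | projT1 k == M]) dG k *+ c k =
   \sum_(j <- s') dl (B2 M) (B1P M).1 j *+ c (existT _ M j : KK).
  by rewrite Es' big_map.
have gtop : GN M (\sum_(j <- s') dl (B2 M) (B1P M).1 j *+ c (existT _ M j : KK)).
  rewrite -Etop; have -> : \sum_(k <- [seq k : KK <- s | projT1 k == M]) dG k *+ c k =
    - \sum_(k <- [seq k : KK <- s | projT1 k != M]) dG k *+ c k.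
    by apply/eqP; rewrite -addr_eq0 -E h0.
  exact: (sgN (Gn_sub cd M) gr).
have dv := ind_Gn pp sU pU cd (ltn0Sn M) (B1P M).2.1 (B2P M).1 (B2P M).2.1 us' gtop.
have top0 : \sum_(k <- [seq k : KK <- s | projT1 k == M]) dG k *+ c k = 0.
  rewrite Etop; apply: big1_seq => j /andP [_ js].
  have /dvdnP [m ->] := dv j js.
  by rewrite mulnC mulrnA (Gn_exp pp cd (dl_Gn (B1P M).1 (B2P M).1 j)) mul0rn.
have rest0 : \sum_(k <- [seq k : KK <- s | projT1 k != M]) dG k *+ c k = 0.
  by move: h0; rewrite E top0 add0r.
case kM: (projT1 k == M).
  have : k \in [seq k : KK <- s | projT1 k == M] by rewrite mem_filter kM ks.
  rewrite Es' => /(@mapP {classic (J1 M.+1 + J2 M.+1)} KK) [j js ->]; exact: dv.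
apply: (IH _ c _ _ rest0); first by rewrite filter_uniq.
  move=> k'; rewrite mem_filter => /andP [kM' ks'].
  by have := hs k' ks'; rewrite ltnS leq_eqVlt (negbTE kM').
by rewrite mem_filter kM ks.
Qed.

Definition fullG (k : KK) : bool := if projT2 k is inl _ then true else false.

Lemma glob_U M (s : seq KK) (c : KK -> nat) : uniq s ->
  (forall k, k \in s -> (projT1 k < M)%N) ->
  U (\sum_(k <- s) dG k *+ c k) -> forall k, k \in s -> ~~ fullG k -> (p %| c k)%N.
Proof.
elim: M s c => [|M IH] s c us hs h0 k ks; first by have := hs k ks.
have [s' [us' Es']] := top_ex M us.
have E := split_top M s c.
have gr := rest_Gn c hs.
have Etop : \sum_(k <- [seq k : KK <- s | projT1 k == M]) dG k *+ c k =
   \sum_(j <- s') dl (B2 M) (B1P M).1 j *+ c (existT _ M j : KK).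
  by rewrite Es' big_map.
have gs : GN M.+1 (\sum_(k <- s) dG k *+ c k).
  apply: (sg_sum (Gn_sub cd _)) => k' /(@InP KK) ks'.
  by apply: (sgMn (Gn_sub cd _)); apply: dG_GnM; exact: hs.
have hN : N1 U phi M.+1 (\sum_(j <- s') dl (B2 M) (B1P M).1 j *+ c (existT _ M j : KK)).
  rewrite -Etop; exists (- \sum_(k <- [seq k : KK <- s | projT1 k != M]) dG k *+ c k),
    (\sum_(k <- s) dG k *+ c k).
  split; first exact: (sgN (Gn_sub cd M) gr).
  by split; [split | rewrite E addrC addrK].
have dv := ind_N1 sU cd (B2P M).2.1 us' hN.
have utop : U (\sum_(k <- [seq k : KK <- s | projT1 k == M]) dG k *+ c k).
  by rewrite Etop; apply: (dl_sum_U sU pU) => j js; exact: dv.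
have urest : U (\sum_(k <- [seq k : KK <- s | projT1 k != M]) dG k *+ c k).
  by move: (sgB sU h0 utop); rewrite E addrC addKr.
case kM: (projT1 k == M).
  have : k \in [seq k : KK <- s | projT1 k == M] by rewrite mem_filter kM ks.
  rewrite Es' => /(@mapP {classic (J1 M.+1 + J2 M.+1)} KK) [j js ->].
  by case: j js => [j|j] js //= _; exact: dv.
apply: (IH _ c _ _ urest); first by rewrite filter_uniq.
  move=> k'; rewrite mem_filter => /andP [kM' ks'].
  by have := hs k' ks'; rewrite ltnS leq_eqVlt (negbTE kM').
by rewrite mem_filter kM ks.
Qed.

Lemma glob_span N x : GN N x -> exists l : seq (KK * nat), x = comb dG l.
Proof.
elim: N x => [|N IH] x hx; first by exists [::]; rewrite comb_nil (Gn0 cd hx).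
have [s [c [us hG]]] := span_Gn_uniq pp cd (B1P N).1 (B1P N).2.2 (B2P N).2.2 hx.
have [l El] := IH _ hG.
exists (l ++ @map _ (KK * nat) (fun j => (existT _ N j, c j)) s).
rewrite comb_cat -El /comb big_map /= subrK //.
Qed.

Lemma glob_dspan x : True -> exists (s : seq KK) c, uniq s /\
  x - \sum_(k <- s) dG k *+ c k = 0.
Proof.
move=> _; have [N hN] := Gn_bound cd x.
have [l El] := glob_span hN.
have [s [c [us Es]]] := comb_uniq (L := KK) dG l.
by exists s, c; split => //; rewrite El Es subrr.
Qed.

Lemma glob_dind (s : seq KK) c : uniq s -> \sum_(k <- s) dG k *+ c k = 0 ->
  forall k, k \in s -> (p ^ levG k %| c k)%N.
Proof.
move=> us h0; apply: (glob_ind (M := (\max_(k <- s) projT1 k).+1)) => // k ks.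
by rewrite ltnS; apply: leq_bigmax_seq.
Qed.


Lemma part2 : pair_iso (fun _ : G => True) U p
       (fun k : {m : nat & (J1 m.+1 + J2 m.+1)%type} => (projT1 k).+1)
       (fun k => if projT2 k is inl _ then true else false).
Proof.
have pgt : (1 < p)%N := prime_gt1 pp.
have levgt : forall k : KK, (0 < levG k)%N by [].
have sB0 : is_subgroup (fun x : G => x = 0).
  by split => // x y -> ->; rewrite subrr.
have sT : is_subgroup (fun _ : G => True) by [].
have dB : forall k : KK, dG k *+ p ^ levG k = 0 by move=> k; exact: (Gn_exp pp cd (@dG_Gn k)).
pose f := pcoord p levG (dG : KK -> G) (fun x => x = 0).
have fD : forall x y k, f (x + y) k = f x k + f y k.
  by move=> x y k; exact: (pcoordD pgt levgt sB0 dB glob_dspan glob_dind (A := fun _ => True)).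
exists f; split => //.
split; first by move=> x y _ _; apply: functional_extensionality_dep => k; exact: fD.
split.
  move=> x y _ _ exy; apply/eqP; rewrite -subr_eq0; apply/eqP.
  apply: (pcoord0B pgt levgt sB0 dB glob_dspan glob_dind (A := fun _ => True)) => // k.
  have := fD (x - y) y k; rewrite subrK exy => h.
  by apply: (addIr (f y k)); rewrite add0r -h.
split.
  move=> x _; have [s [us hs]] :=
    pcoord_supp pgt levgt sB0 dB glob_dspan glob_dind (A := fun _ => True) (x := x) I.
  by exists s => k /hs /InP.
split.
  move=> g [s hs].
  have [x [_ [hx _]]] := pcoord_surj pgt levgt sT sB0 (fun _ => I) dB glob_dind
     (g := g) (s := s) (fun k hk => (@InP KK k s).1 (hs k hk)).
  by exists x; split => //; apply: functional_extensionality_dep => k; exact: hx.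
move=> x _.
have [s [us hs]] :=
    pcoord_supp pgt levgt sB0 dB glob_dspan glob_dind (A := fun _ => True) (x := x) I.
have hr := pcoord_rep2 pgt levgt sB0 dB glob_dspan glob_dind (A := fun _ => True) I us hs.
have Ex : x = \sum_(k <- s) dG k *+ f x k by apply/eqP; rewrite -subr_eq0; apply/eqP.
split.
  move=> ux k nk.
  case ks: (k \in s); last first.
    case: (f x k =P 0) => [->|/hs]; first by rewrite dvdn0.
    by rewrite ks.
  rewrite Ex in ux.
  apply: (glob_U (M := (\max_(k <- s) projT1 k).+1) us _ ux ks nk) => k' ks'.
  by rewrite ltnS; apply: leq_bigmax_seq.
move=> hp; rewrite Ex; apply: (sg_sum sU) => k /(@InP KK) ks.
case: k hp ks => m [j|j] hp ks /=.
  apply: (sgMn sU); exact: (dl_U (B2 m) (B1P m).1 j).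
have /dvdnP [q ->] := hp (existT _ m (inr j)) isT.
by rewrite mulrnA; exact: pU.
Qed.

End Global.
End Main.

Unset Implicit Arguments.

Theorem mainTheorem3 (p : nat) (G : zmodType) (U : G -> Prop)
  (I : Type) (e : I -> nat) (phi : G -> forall i : I, 'Z_(p ^ e i)%N) :
  prime p -> is_subgroup U -> (forall x : G, U (x *+ p)) ->
  cyclic_decomp phi ->
  (forall n : nat, (0 < n)%N ->
     exists D E : G -> Prop,
       (forall x, E x -> D x) /\
       int_dsum (Gn phi n) (Gn phi n.-1) D /\
       int_dsum (fun x => U x /\ Gn phi n x) (fun x => U x /\ Gn phi n.-1 x) E /\
       forall J1 J2 : Type,
         Fp_dim p (addS (Gn phi n.-1) (fun x => U x /\ Gn phi n x))
                  (addS (Gn phi n.-1) (pmulS p (Gn phi n))) J1 ->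
         Fp_dim p (Gn phi n) (addS (Gn phi n.-1) (fun x => U x /\ Gn phi n x)) J2 ->
         pair_iso D E p (fun _ : J1 + J2 => n) (fun k => if k is inl _ then true else false))
  /\
  (forall J1 J2 : nat -> Type,
     (forall n : nat, (0 < n)%N ->
        Fp_dim p (addS (Gn phi n.-1) (fun x => U x /\ Gn phi n x))
                 (addS (Gn phi n.-1) (pmulS p (Gn phi n))) (J1 n) /\
        Fp_dim p (Gn phi n) (addS (Gn phi n.-1) (fun x => U x /\ Gn phi n x)) (J2 n)) ->
     pair_iso (fun _ : G => True) U p
       (fun k : {m : nat & (J1 m.+1 + J2 m.+1)%type} => (projT1 k).+1)
       (fun k => if projT2 k is inl _ then true else false)).
Proof.
move=> pp sU pU cd; split.
  by move=> n hn; exact: (part1 pp sU pU cd hn).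
by move=> J1 J2 H; exact: (part2 pp sU pU cd H).
Qed.
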